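(* For the algorithm described in the context (under Assumptions (A1), (A2), (A3)), for each of the two step-size choices $\gamma_t(i)=\beta(t)$ and $\gamma_t(i)=\beta(n_t(i))$, almost surely for every state $i\in S$: $\sum_{t=0}^\infty q_{\mu_t}(i)\gamma_t(i)=\infty$ and $\sum_{t=0}^\infty q_{\mu_t}(i)^2\gamma_t(i)^2<\infty$.
   Context: Let $\alpha\in(0,1)$ and let $X$ be a Markov decision process with finite state space $S=\{1,\dots,n\}$, finite nonempty action sets $\mathcal A(i)$ ($i\in S$), transition probabilities $P_{ij}(u)$ ($u\in\mathcal A(i)$) and deterministic costs $c(i,u)\ge 0$. A policy is a map $\mu$ with $\mu(i)\in\mathcal A(i)$ for all $i$; it induces a Markov chain $X^\mu$ with transition probabilities $P_{ij}(\mu(i))$. A fixed probability distribution $p$ on $S$ is used as the initial distribution for all policies, and $q_\mu(i)$ denotes the probability that $X^\mu$ with $X^\mu_0\sim p$ ever visits $i$. Assumption (A1): $q_\mu(i)>0$ for every policy $\mu$ and every $i\in S$ (hence, as there are finitely many policies, $q_\mu(i)\ge\delta$ for some $\delta>0$). Assumption (A2): for all $i,j\in S$ and $u,v\in\mathcal A(i)$, $P_{ij}(u)>0$ iff $P_{ij}(v)>0$. The reachability graph is $G=(S,E)$ with $E=\{(i,j):P_{ij}(u)>0\text{ for some }u\}$; $\mathcal T$ denotes its set of transient states. Assumption (A3): the subgraph of $G$ induced by $\mathcal T$ is acyclic. Algorithm: set $J_0=0$. At iteration $t=0,1,2,\dots$: choose a greedy policy $\mu_t$ with respect to $J_t$,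 i.e. $\mu_t(i)\in\arg\min_{u\in\mathcal A(i)}[c(i,u)+\alpha\sum_jP_{ij}(u)J_t(j)]$; independently of the past, draw $X_0^{\mu_t}\sim p$ and simulate a trajectory $(X^{\mu_t}_k)_{k\ge0}$ under $\mu_t$. Let $N_t(i)=\inf\{k: X^{\mu_t}_k=i\}$ and, when $N_t(i)<\infty$, $\tilde J^{\mu_t}(i)=\sum_{k\ge N_t(i)}\alpha^{k-N_t(i)}c(X^{\mu_t}_k,\mu_t(X^{\mu_t}_k))$. Then $J_{t+1}(i)=(1-\gamma_t(i))J_t(i)+\gamma_t(i)\tilde J^{\mu_t}(i)$ if $N_t(i)<\infty$, and $J_{t+1}(i)=J_t(i)$ otherwise. Step sizes: $\beta:\mathbb N\to(0,1]$ deterministic with $\sum_t\beta(t)=\infty$, $\sum_t\beta(t)^2<\infty$, and $\beta$ nonincreasing for $t>T_0$ for some constant $T_0$. $n_t(i)=\sum_{\tau<t}\mathbf 1\{\text{trajectory at iteration }\tau\text{ visits }i\}$ is the number of iterations before $t$ whose trajectory visited $i$. *)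

(* Defs.v *)
From HB Require Import structures.
From mathcomp Require Import all_boot all_order all_algebra.
From mathcomp Require Import all_classical all_reals all_analysis.
Set Implicit Arguments.
Unset Strict Implicit.
Unset Printing Implicit Defensive.
Import Order.TTheory GRing.Theory Num.Theory.
Import numFieldNormedType.Exports.
Local Open Scope classical_set_scope.
Local Open Scope ring_scope.

(* MDP data: states S (finite), a finite type Act of action labels, with   *)
(* the admissible action set A(i) given by the predicate [adm i].          *)
(* Transition probabilities P i u j = P_ij(u), costs c i u.                *)

Section MDP.
Variables (R : realType) (S Act : finType).

Definition is_policy (adm : S -> pred Act) (mu : {ffun S -> Act}) :=
  forall i, mu i \in adm i.

(* h k j = probability that the chain X^mu started at j visits i within
   the first k steps (i.e. at some time 0..k) *)
Fixpoint hitp (P : S -> Act -> S -> R) (mu : {ffun S -> Act}) (i : S)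
    (k : nat) (j : S) : R :=
  match k with
  | 0 => (j == i)%:R
  | k'.+1 => if j == i then 1
             else \sum_(l : S) P j (mu j) l * hitp P mu i k' l
  end.

(* q_mu(i): probability that X^mu with X_0 ~ p ever visits i
   (monotone limit of the finite-horizon hitting probabilities) *)
Definition q_visit (p : S -> R) (P : S -> Act -> S -> R)
    (mu : {ffun S -> Act}) (i : S) : R :=
  \sum_(j : S) p j * limn (fun k => hitp P mu i k j).

Definition edge (adm : S -> pred Act) (P : S -> Act -> S -> R) : rel S :=
  fun i j => [exists u, (u \in adm i) && (0 < P i u j)].

Definition transient (adm : S -> pred Act) (P : S -> Act -> S -> R) : pred S :=
  fun i => [exists j, connect (edge adm P) i j && ~~ connect (edge adm P) j i].

Definition edge_T (adm : S -> pred Act) (P : S -> Act -> S -> R) : rel S :=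
  fun i j => [&& transient adm P i, transient adm P j & edge adm P i j].

Definition acyclic (e : rel S) := forall x y, e x y -> ~~ connect e y x.

Definition greedy (adm : S -> pred Act) (alpha : R) (P : S -> Act -> S -> R)
    (c : S -> Act -> R) (J : S -> R) (mu : {ffun S -> Act}) :=
  forall i, mu i \in adm i /\
    forall u, u \in adm i ->
      c i (mu i) + alpha * \sum_(j : S) P i (mu i) j * J j
      <= c i u + alpha * \sum_(j : S) P i u j * J j.

(* Simulation of a trajectory by the random-mapping representation:       *)
(* X_0 = x0, X_{k+1} = G (k+1) X_k (mu X_k), where G k x u is a sample of  *)
(* the distribution P x u.                                                 *)
Fixpoint traj (mu : {ffun S -> Act}) (x0 : S) (G : nat -> S -> Act -> S)
    (k : nat) : S :=
  match k with
  | 0 => x0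
  | k'.+1 => let x := traj mu x0 G k' in G k'.+1 x (mu x)
  end.

Definition visits (tr : nat -> S) (i : S) : bool := `[< exists k, tr k = i >].

(* N(i): first visit time of i (0 if never visited; then unused) *)
Definition first_visit (tr : nat -> S) (i : S) : nat :=
  match pselect (exists k, tr k == i) with
  | left H => ex_minn H
  | right _ => 0%N
  end.

Definition disc_cost (alpha : R) (c : S -> Act -> R) (mu : {ffun S -> Act})
    (tr : nat -> S) (i : S) : R :=
  let N := first_visit tr i in
  limn (series (fun m => alpha ^+ m * c (tr (N + m)%N) (mu (tr (N + m)%N)))).

(* The algorithm.  [cb] selects the step-size rule:                        *)
(*   cb = false : gamma_t(i) = beta(t);  cb = true : gamma_t(i) = beta(n_t(i)). *)
(* [sel t J] is the greedy policy chosen at iteration t when the current   *)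
(* estimate is J.  [x0 t] and [G t] are the random inputs of iteration t.  *)
(* [alg_state t] = (J_t, n_t).                                             *)
Definition stepsize (cb : bool) (beta : nat -> R) (t : nat) (cnt : S -> nat)
    (i : S) : R := if cb then beta (cnt i) else beta t.

Fixpoint alg_state (alpha : R) (c : S -> Act -> R) (beta : nat -> R) (cb : bool)
    (sel : nat -> (S -> R) -> {ffun S -> Act})
    (x0 : nat -> S) (G : nat -> nat -> S -> Act -> S) (t : nat)
    : (S -> R) * (S -> nat) :=
  match t with
  | 0 => (fun _ => 0, fun _ => 0%N)
  | t'.+1 =>
    let st := alg_state alpha c beta cb sel x0 G t' in
    let J := st.1 in let cnt := st.2 in
    let mu := sel t' J in
    let tr := traj mu (x0 t') (G t') in
    (fun i => if visits tr i then
                (1 - stepsize cb beta t' cnt i) * J i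
                + stepsize cb beta t' cnt i * disc_cost alpha c mu tr i
              else J i,
     fun i => (cnt i + visits tr i)%N)
  end.

Definition alg_policy alpha c beta cb sel x0 G (t : nat) : {ffun S -> Act} :=
  sel t (alg_state alpha c beta cb sel x0 G t).1.

Definition alg_gamma alpha c beta cb sel x0 G (t : nat) (i : S) : R :=
  stepsize cb beta t (alg_state alpha c beta cb sel x0 G t).2 i.

End MDP.

Definition mutually_independent {d} {T : measurableType d} {R : realType}
    (Pr : probability T R) {I : eqType} {S : Type} (X : I -> T -> S) :=
  forall (F : seq I) (v : I -> S), uniq F ->
    Pr (\bigcap_(i in [set` F]) (X i @^-1` [set v i])) =
    (\prod_(i <- F) Pr (X i @^-1` [set v i]))%E.

(* random inputs: initial states (index inl t) and transition samples
   (index inr (t, k, x, u)) combined into one family *)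
Definition rand_inputs {T S Act : Type} (X0 : nat -> T -> S)
    (Y : nat -> nat -> S -> Act -> T -> S)
    (ix : nat + (nat * nat * S * Act)) : T -> S :=
  match ix with
  | inl t => X0 t
  | inr (t, k, x, u) => Y t k x u
  end.

(* Main.v *)
Require Import Defs.
From HB Require Import structures.
From mathcomp Require Import all_boot all_order all_algebra.
From mathcomp Require Import all_classical all_reals all_analysis.
From mathcomp Require Import measurable_realfun.
From mathcomp Require Import ring lra zify.
Import Order.TTheory GRing.Theory Num.Theory.
Import numFieldNormedType.Exports.
Local Open Scope classical_set_scope.
Local Open Scope ring_scope.
Ltac sets_eq := apply/seteqP; split => ? /=; tauto.

Section Core.
Context {R : realType} {d : measure_display} {T : measurableType d}
  (Pr : probability T R) (U : nat -> set T).
Hypothesis mU : forall s, measurable (U s).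

Definition Ncnt (t : nat) (w : T) : nat := (\sum_(s < t) nat_of_bool `[< U s w >])%N.

Lemma NcntS t w : Ncnt t.+1 w = (Ncnt t w + `[< U t w >])%N.
Proof. by rewrite /Ncnt big_ord_recr. Qed.

Lemma Ncnt_le t w : (Ncnt t w <= t)%N.
Proof.
elim: t => [|t IH]; first by rewrite /Ncnt big_ord0.
rewrite NcntS; case: (`[< _ >]) => /=; lia.
Qed.

Definition Nset t n := [set w | Ncnt t w = n].

Lemma Nset0 n : Nset 0 n = if n == 0%N then setT else set0.
Proof.
rewrite /Nset /Ncnt; case: eqP => [->|/eqP n0];
  apply/seteqP; split => w /=; rewrite big_ord0 //.
by move=> h; rewrite -h in n0.
Qed.

Lemma NsetS t n : Nset t.+1 n =
  if n is n'.+1 then (Nset t n' `&` U t) `|` (Nset t n `\` U t)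
  else Nset t 0 `\` U t.
Proof.
apply/seteqP; split => w; rewrite /Nset /= NcntS;
  case: (asboolP (U t w)) => Uw; case: n => [|n] /=; try lia.
- by rewrite addn1 => -[] ->; left.
- by rewrite addn0 => ->.
- by rewrite addn0 => ->; right.
- by move=> [].
- by move=> [[-> _]|[_ ]]; [rewrite addn1|].
- by move=> [[_ ]|[-> _]]; [|rewrite addn0].
Qed.

Lemma mNset t n : measurable (Nset t n).
Proof.
elim: t n => [|t IH] n; first by rewrite Nset0; case: ifP.
rewrite NsetS; case: n => [|n].
  exact: measurableD.
apply: measurableU; [exact: measurableI|exact: measurableD].
Qed.

Definition pr (A : set T) : R := fine (Pr A).

Lemma PrE A : measurable A -> Pr A = (pr A)%:E.
Proof. by move=> mA; rewrite /pr fineK // fin_num_measure. Qed.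

Lemma prD A B : measurable A -> measurable B -> pr (A `\` B) = pr A - pr (A `&` B).
Proof.
move=> mA mB; have hA : (Pr A < +oo)%E by rewrite (PrE _ mA) ltry.
rewrite /pr measureD //.
by rewrite fineB // fin_num_measure //; exact: measurableI.
Qed.

Lemma prU A B : measurable A -> measurable B -> A `&` B = set0 ->
  pr (A `|` B) = pr A + pr B.
Proof.
move=> mA mB AB; rewrite /pr measureU // fineD // fin_num_measure //.
Qed.

Lemma prT : pr setT = 1.
Proof. by rewrite /pr probability_setT. Qed.

Lemma pr0 : pr set0 = 0.
Proof. by rewrite /pr measure0. Qed.

Definition C (L : seq nat) : set T := foldr (fun s A => U s `&` A) setT L.

Lemma mC L : measurable (C L).
Proof. by elim: L => [|s L IH] //=; exact: measurableI. Qed.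

Variable eta : R.
Hypothesis indep : forall L, uniq L -> pr (C L) = eta ^+ size L.

Lemma claim t : forall n L, uniq L -> (forall s, s \in L -> (t <= s)%N) ->
  pr (Nset t n `&` C L) = eta ^+ size L * pr (Nset t n).
Proof.
elim: t => [|t IH] n L uL hL.
  rewrite Nset0; case: ifP => _.
    by rewrite setTI prT mulr1 indep.
  by rewrite set0I pr0 mulr0.
have D0 : forall m L, uniq L -> (forall s, s \in L -> (t < s)%N) ->
    pr ((Nset t m `&` C L) `\` U t) =
    eta ^+ size L * pr (Nset t m) - eta ^+ (size L).+1 * pr (Nset t m).
  move=> m L' uL' hL'.
  have e2 : (Nset t m `&` C L') `&` U t = Nset t m `&` C (t :: L') by rewrite /=; sets_eq.
  rewrite prD ?e2; last exact: mU.
    rewrite !IH //.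
    - rewrite /= uL' andbT; apply/negP => /hL'; lia.
    - move=> s; rewrite inE => /orP[/eqP ->//|/hL']; lia.
    - move=> s /hL'; lia.
  by apply: measurableI; [exact: mNset|exact: mC].
have hL0 : forall s, s \in L -> (t < s)%N by move=> s /hL; lia.
case: n => [|n].
  rewrite NsetS.
  have -> : (Nset t 0 `\` U t) `&` C L = (Nset t 0 `&` C L) `\` U t by sets_eq.
  have -> : Nset t 0 `\` U t = (Nset t 0 `&` C [::]) `\` U t by rewrite /= setIT.
  rewrite !D0 //= expr0 expr1 exprS; ring.
have -> : pr (Nset t.+1 n.+1) = pr (Nset t.+1 n.+1 `&` C [::]) by rewrite /= setIT.
rewrite NsetS.
have E : forall L', ((Nset t n `&` U t) `|` (Nset t n.+1 `\` U t)) `&` C L' =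
   (Nset t n `&` C (t :: L')) `|` ((Nset t n.+1 `&` C L') `\` U t) by move=> L'; rewrite /=; sets_eq.
have mX : forall L' m, measurable (Nset t m `&` C L') by move=> *; apply: measurableI; [exact: mNset|exact: mC].
have uL1 : uniq (t :: L) by rewrite /= uL andbT; apply/negP => /hL0; lia.
have hL1 : forall s, s \in t :: L -> (t <= s)%N.
  move=> s; rewrite inE => /orP[/eqP ->//|/hL0]; lia.
have hL2 : forall s, s \in [:: t] -> (t <= s)%N by move=> s; rewrite inE => /eqP ->.
rewrite !E !prU; first (rewrite !D0 // !IH //=; rewrite !exprS expr0; ring).
all: try exact: mX.
all: try (apply: measurableD; [exact: mX|exact: mU]).
all: apply/seteqP; split => w //=; tauto.
Qed.

Section Integrals.
Local Open Scope ereal_scope.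
Variable f : nat -> R.
Hypothesis f0 : forall n, (0 <= f n)%R.

Definition Fe t w : \bar R := \sum_(n < t.+1) (f n * \1_(Nset t n) w)%:E.
Definition Ge t w : \bar R := \sum_(n < t.+1) (f n * \1_(Nset t n `&` U t) w)%:E.

Lemma FeE t w : Fe t w = (f (Ncnt t w))%:E.
Proof.
rewrite /Fe sumEFin; congr EFin.
have h : (Ncnt t w < t.+1)%N by rewrite ltnS Ncnt_le.
rewrite (bigD1 (Ordinal h)) //= indicE mem_set // mulr1 big1 ?addr0 // => i /eqP ne.
rewrite indicE memNset ?mulr0 // => /= eq; apply: ne; apply: val_inj => /=; by [].
Qed.

Lemma GeE t w : Ge t w = if `[< U t w >] then (f (Ncnt t w))%:E else 0.
Proof.
case: asboolP => Uw.
  rewrite -FeE /Fe; apply: eq_bigr => i _; congr (_ * _)%:E.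
  rewrite !indicE; congr (_%:R).
  case: (boolP (w \in Nset t i)) => h.
    by rewrite mem_set //; split => //; exact/set_mem.
  by rewrite memNset // => -[] /mem_set; rewrite (negbTE h).
rewrite /Ge big1 // => i _; rewrite indicE memNset ?mulr0 //= => -[] _ /Uw [].
Qed.

Lemma Ge_partial T' w : \sum_(t < T') Ge t w = \sum_(n < Ncnt T' w) (f n)%:E.
Proof.
elim: T' => [|T' IH]; first by rewrite /Ncnt !big_ord0.
rewrite big_ord_recr /= IH GeE NcntS; case: asboolP => _ /=.
  by rewrite addn1 big_ord_recr.
by rewrite addn0 adde0.
Qed.

Lemma Ge0 t w : 0 <= Ge t w.
Proof. by rewrite GeE; case: ifP => // _; rewrite lee_fin. Qed.

Lemma Fe0 t w : 0 <= Fe t w.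
Proof. by rewrite FeE lee_fin. Qed.

Lemma Ge_series w : \sum_(0 <= t <oo) Ge t w <= \sum_(0 <= n <oo) (f n)%:E.
Proof.
apply: lime_le; first by apply: is_cvg_nneseries => n _ _; exact: Ge0.
apply: nearW => T'; rewrite /= big_mkord Ge_partial.
rewrite -(big_mkord xpredT (fun n => (f n)%:E)).
by apply: nneseries_lim_ge => n _ _; rewrite lee_fin.
Qed.

Lemma mFe t : measurable_fun setT (Fe t).
Proof.
apply: emeasurable_sum => n; apply/measurable_EFinP.
by apply: measurable_funM => //; apply: measurable_indic; exact: mNset.
Qed.

Lemma mGe t : measurable_fun setT (Ge t).
Proof.
apply: emeasurable_sum => n; apply/measurable_EFinP.
by apply: measurable_funM => //; apply: measurable_indic; apply: measurableI => //; exact: mNset.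
Qed.

Lemma int_sum (A : nat -> set T) t : (forall n, measurable (A n)) ->
  \int[Pr]_w (\sum_(n < t.+1) (f n * \1_(A n) w)%:E) =
  \sum_(n < t.+1) (f n)%:E * Pr (A n).
Proof.
move=> mA; rewrite ge0_integral_sum //.
- apply: eq_bigr => n _.
  rewrite (@integralZl_indic _ _ _ Pr setT measurableT (fun _ => A n)) //.
    by rewrite integral_indic // setIT.
  by move=> h; have := f0 n; rewrite leNgt h.
- move=> n; apply/measurable_EFinP.
  by apply: measurable_funM => //; apply: measurable_indic.
- by move=> n x _; rewrite lee_fin mulr_ge0 // indicE.
Qed.

Lemma intGe t : (0 < eta)%R ->
  \int[Pr]_w Ge t w = eta%:E * \int[Pr]_w Fe t w.
Proof.
move=> e0; rewrite /Ge /Fe (int_sum (fun n => Nset t n `&` U t)); last first.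
  by move=> n; apply: measurableI => //; exact: mNset.
rewrite (int_sum (Nset t)); last by move=> n; exact: mNset.
rewrite ge0_sume_distrr; last by move=> n _; rewrite mule_ge0 // ?lee_fin // measure_ge0.
apply: eq_bigr => n _.
rewrite (PrE _ (mNset t n)) (PrE _ (measurableI _ _ (mNset t n) (mU t))).
have := claim t n [:: t] isT.
rewrite /= setIT expr1 => ->; last by move=> s; rewrite inE => /eqP ->.
by rewrite -!EFinM; congr EFin; ring.
Qed.

Lemma core_ae : (0 < eta)%R -> \sum_(0 <= n <oo) (f n)%:E < +oo ->
  {ae Pr, forall w, \sum_(0 <= t <oo) (f (Ncnt t w))%:E < +oo}.
Proof.
move=> e0 fin.
have eqh : forall w, \sum_(0 <= t <oo) (f (Ncnt t w))%:E = \sum_(0 <= t <oo) Fe t w.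
  by move=> w; apply: eq_eseriesr => t _; rewrite FeE.
have mh : measurable_fun setT (fun w => \sum_(0 <= t <oo) Fe t w).
  by apply: ge0_emeasurable_sum => [k x _ _|k _]; [exact: Fe0|exact: mFe].
have hint : \int[Pr]_w (\sum_(0 <= t <oo) Fe t w) < +oo.
  rewrite integral_nneseries //; last 2 first.
  - by move=> n; exact: mFe.
  - by move=> n x _; exact: Fe0.
  have -> : \sum_(0 <= t <oo) \int[Pr]_w Fe t w =
            \sum_(0 <= t <oo) ((eta^-1)%:E * \int[Pr]_w Ge t w).
    apply: eq_eseriesr => t _; rewrite intGe // muleA -EFinM mulVf ?gt_eqF //.
    by rewrite mul1e.
  rewrite nneseriesZl; last by move=> t _; apply: integral_ge0 => w _; exact: Ge0.
  rewrite -integral_nneseries //; last 2 first.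
  - by move=> n; exact: mGe.
  - by move=> n x _; exact: Ge0.
  apply: lte_mul_pinfty.
  - by rewrite lee_fin invr_ge0 ltW.
  - by [].
  apply: (le_lt_trans _ fin).
  apply: (le_trans (y := \int[Pr]_w (cst (\sum_(0 <= n <oo) (f n)%:E)) w)).
    apply: ge0_le_integral => //.
    - by move=> w _; apply: nneseries_ge0 => t _ _; exact: Ge0.
    - by apply: ge0_emeasurable_sum => [k x _ _|k _]; [exact: Ge0|exact: mGe].
    - by move=> w _; exact: Ge_series.
  rewrite integral_cst // -[leRHS]mule1; apply: lee_wpmul2l.
    by apply: nneseries_ge0 => *; rewrite lee_fin.
  exact: probability_le1.
have hI : Pr.-integrable setT (fun w => \sum_(0 <= t <oo) Fe t w).
  apply/integrableP; split => //.
  rewrite (eq_integral (fun w => \sum_(0 <= t <oo) Fe t w)) //.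
  move=> w _; rewrite gee0_abs //; apply: nneseries_ge0 => t _ _; exact: Fe0.
have := integrable_ae measurableT hI.
apply: filterS => w /(_ I) hw.
by rewrite eqh -ge0_fin_numE // nneseries_ge0 // => t _ _; exact: Fe0.
Qed.

End Integrals.

End Core.

Section Gen.
Variable R : realType.

Lemma exists_pos_lb (A : eqType) (s : seq A) (g : A -> R) :
  (forall x, x \in s -> 0 < g x) -> exists2 dl, 0 < dl & forall x, x \in s -> dl <= g x.
Proof.
elim: s => [|a s IH] H; first by exists 1 => //.
have [dl dl0 Hdl] : exists2 dl, 0 < dl & forall x, x \in s -> dl <= g x.
  by apply: IH => x xs; apply: H; rewrite inE xs orbT.
have ga := H a (mem_head a s).
exists (Num.min dl (g a)); first by rewrite lt_min dl0 ga.
move=> x; rewrite inE => /orP[/eqP ->|xs]; first by rewrite ge_min lexx orbT.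
by rewrite ge_min Hdl.
Qed.

Lemma exists_ub (A : eqType) (s : seq A) (g : A -> R) :
  exists M, forall x, x \in s -> g x <= M.
Proof.
elim: s => [|a s [M HM]]; first by exists 0.
exists (Num.max M (g a)) => x; rewrite inE => /orP[/eqP ->|xs]; first by rewrite le_max lexx orbT.
by rewrite le_max HM.
Qed.

Variables (S Act : finType) (adm : S -> pred Act) (P : S -> Act -> S -> R).
Hypothesis P0 : forall i u j, u \in adm i -> 0 <= P i u j.

Lemma hitp_ge0 mu i k j : is_policy adm mu -> 0 <= hitp P mu i k j.
Proof.
move=> pol; elim: k j => [|k IH] j /=; first by case: (j == i).
case: (j == i) => //; apply: sumr_ge0 => l _; apply: mulr_ge0 => //; exact: P0.
Qed.

Lemma hitp_path mu i k j : is_policy adm mu -> hitp P mu i k j != 0 ->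
  exists r (x : nat -> S), [/\ x 0%N = j, x r = i &
     forall m, (m < r)%N -> 0 < P (x m) (mu (x m)) (x m.+1)].
Proof.
move=> pol; elim: k j => [|k IH] j /=.
  case: (boolP (j == i)) => [/eqP -> _|_]; last by rewrite eqxx.
  by exists 0%N, (fun _ => i); split => // m; rewrite ltn0.
case: (boolP (j == i)) => [/eqP -> _|ji].
  by exists 0%N, (fun _ => i); split => // m; rewrite ltn0.
move=> H; have [l _ Hl] : exists2 l, l \in index_enum S & P j (mu j) l * hitp P mu i k l != 0.
  apply/exists_inP; apply: contraNT H; rewrite negb_exists_in => /forall_inP H.
  by apply/eqP; rewrite big1_seq // => l /andP[_ lin]; apply/eqP; apply: negbNE; apply: H.
have Pl : P j (mu j) l != 0 by apply: contraNneq Hl => ->; rewrite mul0r.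
have hl : hitp P mu i k l != 0 by apply: contraNneq Hl => ->; rewrite mulr0.
have [r [x [x0 xr xP]]] := IH l hl.
exists r.+1, (fun m => if m is m'.+1 then x m' else j); split => //.
case=> [|m] /=; last by rewrite ltnS; exact: xP.
by rewrite x0 lt_def Pl P0.
Qed.

Lemma traj_path mu x0 G (x : nat -> S) r : is_policy adm mu -> x0 = x 0%N ->
  (forall m u, (m < r)%N -> u \in adm (x m) -> G m.+1 (x m) u = x m.+1) ->
  forall m, (m <= r)%N -> traj mu x0 G m = x m.
Proof.
move=> pol -> H; elim=> [|m IH] // mr /=.
by rewrite IH ?(ltnW mr) // H.
Qed.

Lemma cnt_sum (alpha : R) (c : S -> Act -> R) beta cb sel x0 G t i :
  (alg_state alpha c beta cb sel x0 G t).2 i =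
  (\sum_(s < t) visits (traj (sel s (alg_state alpha c beta cb sel x0 G s).1) (x0 s) (G s)) i)%N.
Proof. by elim: t => [|t IH]; rewrite ?big_ord0 // big_ord_recr /= IH. Qed.

Lemma prod_const_seq (A : Type) (L : seq A) (a : R) : \prod_(s <- L) a = a ^+ size L.
Proof. by elim: L => [|b L IH]; rewrite ?big_nil ?expr0 // big_cons IH exprS. Qed.


End Gen.

Lemma C_mem {d} {T : measurableType d} (U : nat -> set T) L w :
  C U L w <-> forall s, s \in L -> U s w.
Proof.
elim: L => [|a L IH] /=; first by split.
split.
  move=> [Ua /IH H] s; rewrite inE => /orP[/eqP ->//|]; exact: H.
move=> H; split; first by apply: H; rewrite mem_head.
by apply/IH => s sL; apply: H; rewrite inE sL orbT.
Qed.

Section Events.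
Variables (R : realType) (S Act : finType) (adm : S -> pred Act) (P : S -> Act -> S -> R) (p : S -> R).
Variables (d : measure_display) (Omega : measurableType d) (Pr : probability Omega R)
  (X0 : nat -> Omega -> S) (Y : nat -> nat -> S -> Act -> Omega -> S).
Hypothesis mX0 : forall t j, measurable (X0 t @^-1` [set j]).
Hypothesis mY : forall t k x u j, measurable (Y t k x u @^-1` [set j]).
Hypothesis PrX0 : forall t j, Pr (X0 t @^-1` [set j]) = (p j)%:E.
Hypothesis PrY : forall t k x u j, u \in adm x -> Pr (Y t k x u @^-1` [set j]) = (P x u j)%:E.
Hypothesis ind : mutually_independent Pr (rand_inputs X0 Y).
Variables (x : nat -> S) (r : nat).

Definition pl : seq (nat * Act) :=
  [seq mu <- [seq (m, u) | m <- iota 0 r, u <- enum Act] | mu.2 \in adm (x mu.1)].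

Lemma mem_pl m u : ((m, u) \in pl) = (m < r)%N && (u \in adm (x m)).
Proof.
rewrite mem_filter /= andbC; congr (_ && _).
apply/allpairsP/idP => [[[m' u'] [/= m'i _ [-> _]]]|mr].
  by move: m'i; rewrite mem_iota.
by exists (m, u); rewrite mem_iota mem_enum.
Qed.

Lemma pl_uniq : uniq pl.
Proof.
apply: filter_uniq; apply: allpairs_uniq; [exact: iota_uniq|exact: enum_uniq|].
by move=> [a b] [a' b'] _ _ /=.
Qed.

Definition Uev s := [set w | X0 s w = x 0%N /\
  forall m u, (m < r)%N -> u \in adm (x m) -> Y s m.+1 (x m) u w = x m.+1].

Definition FL (L : seq nat) : seq (nat + (nat * nat * S * Act)) :=
  [seq inl s | s <- L] ++ [seq inr (s, mu.1.+1, x mu.1, mu.2) | s <- L, mu <- pl].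

Definition vv (ix : nat + (nat * nat * S * Act)) : S :=
  match ix with inl _ => x 0%N | inr (_, k, _, _) => x k end.

Lemma C_eq L : C Uev L =
  \bigcap_(ix in [set` FL L]) (rand_inputs X0 Y ix @^-1` [set vv ix]).
Proof.
apply/seteqP; split => w.
- move/C_mem => HC ix /= ixF.
  rewrite mem_cat in ixF; case/orP: ixF => [/mapP [s sL ->]|/allpairsP [[s mu] [/= sL mupl ->]]] /=.
    by case: (HC s sL).
  move: mupl; case: mu => m u /=; rewrite mem_pl => /andP[mr ua].
  by have [_ h] := HC s sL; exact: h.
- move=> H; apply/C_mem => s sL; split.
    have := H (inl s); apply; rewrite /= mem_cat; apply/orP; left; exact: map_f.
  move=> m u mr ua; have := H (inr (s, m.+1, x m, u)); apply.
  rewrite /= mem_cat; apply/orP; right.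
  apply/allpairsP; exists (s, (m, u)); split => //=.
  by rewrite mem_pl mr ua.
Qed.

Lemma FL_uniq L : uniq L -> uniq (FL L).
Proof.
move=> uL; rewrite cat_uniq; apply/and3P; split.
- by rewrite map_inj_uniq // => a b [].
- apply/hasPn => ix /allpairsP [[s mu] [_ _ ->]] /=.
  by apply/mapP => -[].
- apply: allpairs_uniq => //; first exact: pl_uniq.
  move=> [s [m u]] [s' [m' u']] /allpairsP [[s1 [m1 u1]] [_ /= h1 [-> -> ->]]].
  move=> /allpairsP [[s2 [m2 u2]] [_ /= h2 [-> -> ->]]] /= [-> -> _ ->] //.
Qed.

Lemma mUev s : measurable (Uev s).
Proof.
have -> : Uev s = C Uev [:: s] by rewrite /= setIT.
rewrite C_eq; apply: fin_bigcap_measurable; first exact: finite_seq.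
by move=> [t|[[[t k] y] u]] _ /=.
Qed.

Definition eta := p (x 0%N) * \prod_(mu <- pl) P (x mu.1) mu.2 (x mu.1.+1).

Lemma Uev_indep L : uniq L -> pr Pr (C Uev L) = eta ^+ size L.
Proof.
move=> uL; rewrite /pr C_eq ind; last exact: FL_uniq.
rewrite big_cat /= !big_map big_allpairs_dep /=.
rewrite [X in (X * _)%E](eq_bigr (fun _ => (p (x 0%N))%:E)); last by move=> s _; rewrite PrX0.
rewrite [X in (_ * X)%E](eq_bigr (fun _ => (\prod_(mu <- pl) P (x mu.1) mu.2 (x mu.1.+1))%:E)); last first.
  move=> s _; rewrite -prodEFin big_seq [in RHS]big_seq; apply: eq_bigr => -[m u].
  by rewrite mem_pl => /andP[_ ua] /=; rewrite PrY.
rewrite !prodEFin /= !prod_const_seq.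
by rewrite /eta exprMn.
Qed.

End Events.

Theorem lemma4
  (R : realType) (S Act : finType)
  (adm : S -> pred Act) (P : S -> Act -> S -> R) (c : S -> Act -> R)
  (alpha : R) (p : S -> R) (beta : nat -> R) (T0 : nat)
  (sel : nat -> (S -> R) -> {ffun S -> Act})
  (d : measure_display) (Omega : measurableType d) (Pr : probability Omega R)
  (X0 : nat -> Omega -> S) (Y : nat -> nat -> S -> Act -> Omega -> S) :
  (* MDP data *)
  (0 < alpha < 1) ->
  (forall i, exists u, u \in adm i) ->
  (forall i u j, u \in adm i -> 0 <= P i u j) ->
  (forall i u, u \in adm i -> \sum_(j : S) P i u j = 1) ->
  (forall i u, u \in adm i -> 0 <= c i u) ->
  (forall j, 0 <= p j) -> \sum_(j : S) p j = 1 ->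
  (* (A1) *)
  (forall mu, is_policy adm mu -> forall i, 0 < q_visit p P mu i) ->
  (* (A2) *)
  (forall i j u v, u \in adm i -> v \in adm i -> (0 < P i u j) = (0 < P i v j)) ->
  (* (A3) *)
  acyclic (edge_T adm P) ->
  (* step sizes *)
  (forall t, 0 < beta t <= 1) ->
  (\sum_(0 <= t <oo) (beta t)%:E = +oo)%E ->
  (\sum_(0 <= t <oo) (beta t ^+ 2)%:E < +oo)%E ->
  (forall s t, (T0 < s)%N -> (s <= t)%N -> beta t <= beta s) ->
  (* greedy policy selection *)
  (forall t J, greedy adm alpha P c J (sel t J)) ->
  (* randomness: independent initial states ~ p and transition samples ~ P x u *)
  (forall t j, measurable (X0 t @^-1` [set j])) ->
  (forall t k x u j, measurable (Y t k x u @^-1` [set j])) ->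
  (forall t j, Pr (X0 t @^-1` [set j]) = (p j)%:E) ->
  (forall t k x u j, u \in adm x -> Pr (Y t k x u @^-1` [set j]) = (P x u j)%:E) ->
  mutually_independent Pr (rand_inputs X0 Y) ->
  (* conclusion, for both step-size rules *)
  forall cb : bool,
  {ae Pr, forall w, forall i : S,
     let mu_ t := alg_policy alpha c beta cb sel (fun t => X0 t w)
                    (fun t k x u => Y t k x u w) t in
     let gam t := alg_gamma alpha c beta cb sel (fun t => X0 t w)
                    (fun t k x u => Y t k x u w) t i in
     (\sum_(0 <= t <oo) (q_visit p P (mu_ t) i * gam t)%:E = +oo)%E /\
     (\sum_(0 <= t <oo) ((q_visit p P (mu_ t) i) ^+ 2 * (gam t) ^+ 2)%:E < +oo)%E}.
Proof.
move=> _ Hadm P0 _ _ p0 _ A1 A2 _ hb hsum hsum2 hmono hgreedy mX0 mY PrX0 PrY ind cb.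
have polsel : forall t J, is_policy adm (sel t J) by move=> t J i; case: (hgreedy t J i).
pose polb := fun mu : {ffun S -> Act} => [forall i, mu i \in adm i].
have polmem : forall mu, is_policy adm mu ->
    mu \in [seq mu <- enum {ffun S -> Act} | polb mu].
  by move=> mu pol; rewrite mem_filter mem_enum andbT; apply/forallP.
have [m0' m0'0 Hm0'] := @exists_pos_lb R _ (iota 0 T0.+1) beta
   (fun k _ => (andP (hb k)).1).
pose m0 := Num.min m0' 1.
have m00 : 0 < m0 by rewrite lt_min m0'0 ltr01.
have m01 : m0 <= 1 by rewrite ge_min lexx orbT.
have b0 : forall k, 0 < beta k by move=> k; case/andP: (hb k).
have b1 : forall k, beta k <= 1 by move=> k; case/andP: (hb k).
have gam_lb : forall k n, (n <= k)%N -> m0 * beta k <= beta n.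
  move=> k n nk; case: (leqP n T0) => nT.
    apply: (le_trans (y := m0)); first by rewrite -[leRHS]mulr1 ler_wpM2l // ltW.
    apply: (le_trans (y := m0')); first by rewrite ge_min lexx.
    by apply: Hm0'; rewrite mem_iota /= ltnS.
  apply: (le_trans (y := beta k)); last exact: hmono.
  by rewrite -[leRHS]mul1r ler_wpM2r // ltW.
have gam_ub : forall k n, (k <= n)%N -> beta n <= beta k / m0.
  move=> k n kn; rewrite ler_pdivlMr //.
  by rewrite mulrC gam_lb.
apply: filter_forall => i.
have [dl dl0 Hdl] := @exists_pos_lb R _ [seq mu <- enum {ffun S -> Act} | polb mu]
  (fun mu => q_visit p P mu i)
  (fun mu h => A1 mu (fun j => (forallP (andP (eqbLR (mem_filter _ _ _) h)).1) j) i).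
have [M HM] := @exists_ub R _ (enum {ffun S -> Act}) (fun mu => q_visit p P mu i).
have qlb : forall mu, is_policy adm mu -> dl <= q_visit p P mu i.
  by move=> mu pol; apply: Hdl; exact: polmem.
have qub : forall mu, q_visit p P mu i <= M by move=> mu; apply: HM; rewrite mem_enum.
pose mu0 := [ffun j => xchoose (Hadm j)].
have pol0 : is_policy adm mu0 by move=> j; rewrite ffunE; exact: xchooseP.
have [j pj hj] : exists2 j, 0 < p j & limn (fun k => hitp P mu0 i k j) != 0.
  have : [exists j, p j * limn (fun k => hitp P mu0 i k j) != 0].
    have := A1 mu0 pol0 i; rewrite /q_visit => H.
    case: (boolP [exists j, p j * limn (fun k => hitp P mu0 i k j) != 0]) => // /existsPn h.
    move: H; rewrite big1 ?ltxx // => j _; apply/eqP; move: (h j); by rewrite negbK.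
  move=> /existsP [j]; rewrite mulf_eq0 negb_or => /andP[pj hj].
  by exists j => //; rewrite lt_def pj p0.
have [k hk] : exists k, hitp P mu0 i k j != 0.
  case: (pselect (exists k, hitp P mu0 i k j != 0)) => // H.
  move: hj; have -> : (fun k => hitp P mu0 i k j) = fun _ => 0.
    apply/funext => k; apply/eqP; apply: negbNE; apply/negP => hk; apply: H; by exists k.
  rewrite lim_cst //; by rewrite eqxx.
have [r [x [x0 xr xP]]] := @hitp_path R S Act adm P P0 mu0 i k j pol0 hk.
have xPall : forall m u, (m < r)%N -> u \in adm (x m) -> 0 < P (x m) u (x m.+1).
  by move=> m u mr ua; rewrite (A2 _ _ u (mu0 (x m)) ua (pol0 _)); exact: xP.
pose U := @Uev S Act adm d Omega X0 Y x r.
have eta0 : 0 < @eta R S Act adm P p x r.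
  rewrite /eta mulr_gt0 ?x0 // big_seq; apply: prodr_gt0 => -[m u].
  by rewrite mem_pl => /andP[mr ua]; exact: xPall.
pose f n := beta n ^+ 2 / m0 ^+ 2.
have f0 : forall n, 0 <= f n.
  by move=> n; rewrite /f divr_ge0 // exprn_ge0 // ltW.
have fin : (\sum_(0 <= n <oo) (f n)%:E < +oo)%E.
  rewrite (eq_eseriesr (g := fun n => (((m0 ^+ 2)^-1)%:E * (beta n ^+ 2)%:E)%E)); last first.
    by move=> n _; rewrite -EFinM mulrC.
  rewrite nneseriesZl; last by move=> n _; rewrite lee_fin exprn_ge0 // ltW.
  apply: lte_mul_pinfty => //; by rewrite lee_fin invr_ge0 exprn_ge0 // ltW.
have hae := core_ae Pr U (@mUev S Act adm d Omega X0 Y mX0 mY x r) _ (@Uev_indep R S Act adm P p d Omega Pr X0 Y PrX0 PrY ind x r) f f0 eta0 fin.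
apply: filterS hae => w Hw.
pose x0w := fun t => X0 t w.
pose Gw := fun t k y u => Y t k y u w.
change (X0^~ w) with x0w; change (fun (t0 k0 : nat) (x1 : S) => (Y t0 k0 x1)^~ w) with Gw.
pose cnt t := (alg_state alpha c beta cb sel x0w Gw t).2 i.
have gE : forall t, alg_gamma alpha c beta cb sel x0w Gw t i =
    if cb then beta (cnt t) else beta t by [].
have vis : forall s J, U s w -> visits (traj (sel s J) (x0w s) (Gw s)) i.
  move=> s J [hx0 hY]; apply/asboolP; exists r.
  rewrite (@traj_path S Act adm (sel s J) (x0w s) (Gw s) x r (polsel s J) hx0 _ r (leqnn r)) //.
have cnt_le : forall t, (cnt t <= t)%N.
  move=> t; rewrite /cnt cnt_sum -[leqRHS]card_ord -sum1_card leq_sum // => s _.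
  exact: leq_b1.
have N_le : forall t, (Ncnt U t w <= cnt t)%N.
  move=> t; rewrite /cnt cnt_sum /Ncnt leq_sum // => s _.
  by case: asboolP => // Us; rewrite lt0b; apply: vis.
have glb : forall t, m0 * beta t <= alg_gamma alpha c beta cb sel x0w Gw t i.
  move=> t; rewrite gE; case: ifP => _; first exact: gam_lb.
  by rewrite -[leRHS]mul1r ler_wpM2r // ltW.
have gub : forall t, alg_gamma alpha c beta cb sel x0w Gw t i <=
    beta (if cb then Ncnt U t w else t) / m0.
  move=> t; rewrite gE; case: ifP => _; first exact: gam_ub.
  exact: gam_ub.
have g0 : forall t, 0 <= alg_gamma alpha c beta cb sel x0w Gw t i.
  by move=> t; apply: le_trans (glb t); rewrite mulr_ge0 // ltW.
have qlb' : forall t, dl <= q_visit p P (alg_policy alpha c beta cb sel x0w Gw t) i.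
  by move=> t; apply: qlb; exact: polsel.
have q0 : forall t, 0 <= q_visit p P (alg_policy alpha c beta cb sel x0w Gw t) i.
  by move=> t; apply: le_trans (qlb' t); exact: ltW.
split.
  have : ((dl * m0)%:E * \sum_(0 <= t <oo) (beta t)%:E <=
      \sum_(0 <= t <oo) (q_visit p P (alg_policy alpha c beta cb sel x0w Gw t) i *
         alg_gamma alpha c beta cb sel x0w Gw t i)%:E)%E.
    rewrite -nneseriesZl; last by move=> t _; rewrite lee_fin ltW.
    apply: lee_nneseries => [t _ _|t _]; rewrite -EFinM lee_fin.
      by rewrite !mulr_ge0 // ltW.
    by rewrite -mulrA; apply: ler_pM => //; [exact: ltW|rewrite mulr_ge0 // ltW].
  rewrite hsum gt0_muley ?lte_fin ?mulr_gt0 // => H; apply/eqP; rewrite -leye_eq; exact: H.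
have Hg : (\sum_(0 <= t <oo) (f (if cb then Ncnt U t w else t))%:E < +oo)%E.
  by case: (cb); [exact: Hw|exact: fin].
apply: (le_lt_trans (y := ((M ^+ 2)%:E * \sum_(0 <= t <oo) (f (if cb then Ncnt U t w else t))%:E)%E)).
  rewrite -nneseriesZl; last by move=> t _; rewrite lee_fin.
  apply: lee_nneseries => [t _ _|t _]; rewrite ?lee_fin ?mulr_ge0 ?exprn_ge0 //.
  apply: ler_pM; [exact: exprn_ge0 (q0 t)|exact: exprn_ge0 (g0 t)| |].
    by rewrite !expr2; apply: ler_pM => //; exact: qub.
  by rewrite /f -expr_div_n !expr2; apply: ler_pM => //; exact: gub.
apply: lte_mul_pinfty => //; by rewrite lee_fin sqr_ge0.
Qed.
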